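(* Let $d, d_0$ be metrics on a set $E$ such that $d$ takes values in $\lambda \mathbb{Z}$ and $d_0$ takes values in $[0,\lambda)$ for some real $\lambda > 0$. Then $d+d_0$ is a metric on $E$ refining $d$. In particular, if $d$ takes integer values, then $d + d'_{\flat}$ is a metric refining $d$ for any metric $d'$ on $E$, where $d'_\flat = d'/(1+d')$.
   Context: Metrics on $E$ are regarded as functions on the Cartesian product $E \times E$. For functions $f,f'\colon E\times E \to \mathbb{R}$, $f'$ refines $f$ if for all pairs $(x_1,x_2),(x_1',x_2') \in E\times E$ that agree in at least one coordinate, $f(x_1,x_2) < f(x_1',x_2')$ implies $f'(x_1,x_2) < f'(x_1',x_2')$. *)

(* Defs.v *)
From Stdlib Require Import Reals ZArith.
Open Scope R_scope.

Definition is_metric {E : Type} (d : E -> E -> R) : Prop :=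
  (forall x y, 0 <= d x y) /\
  (forall x y, d x y = 0 <-> x = y) /\
  (forall x y, d x y = d y x) /\
  (forall x y z, d x z <= d x y + d y z).

Definition refines {E : Type} (f' f : E -> E -> R) : Prop :=
  forall x1 x2 x1' x2' : E,
    (x1 = x1' \/ x2 = x2') ->
    f x1 x2 < f x1' x2' -> f' x1 x2 < f' x1' x2'.

Definition flat {E : Type} (d' : E -> E -> R) : E -> E -> R :=
  fun x y => d' x y / (1 + d' x y).

(* Main.v *)
Require Import Defs.
From Stdlib Require Import Reals ZArith Lra Lia Psatz.
Open Scope R_scope.

Lemma part1 : forall (E : Type) (d d0 : E -> E -> R) (lam : R),
      0 < lam ->
      is_metric d -> is_metric d0 ->
      (forall x y, exists k : Z, d x y = lam * IZR k) ->
      (forall x y, 0 <= d0 x y < lam) ->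
      is_metric (fun x y => d x y + d0 x y) /\
      refines (fun x y => d x y + d0 x y) d.
Proof.
  intros E d d0 lam Hl [P1 [P2 [P3 P4]]] [Q1 [Q2 [Q3 Q4]]] Hk Hb.
  split.
  - split; [intros; specialize (P1 x y); specialize (Q1 x y); lra|].
    split; [|split].
    + intros x y; split.
      * intros H. apply P2. specialize (P1 x y); specialize (Q1 x y); lra.
      * intros ->. rewrite (proj2 (P2 y y) eq_refl), (proj2 (Q2 y y) eq_refl). lra.
    + intros; rewrite P3, Q3; reflexivity.
    + intros x y z; specialize (P4 x y z); specialize (Q4 x y z); lra.
  - intros x1 x2 x1' x2' _ H.
    destruct (Hk x1 x2) as [a Ha]; destruct (Hk x1' x2') as [b Hb'].
    rewrite Ha, Hb' in H.
    assert (IZR a < IZR b) by (apply (Rmult_lt_reg_l lam); lra).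
    apply lt_IZR in H0.
    assert (IZR (a + 1) <= IZR b) by (apply IZR_le; lia).
    rewrite plus_IZR in H1.
    specialize (Hb x1 x2); specialize (Q1 x1' x2').
    assert (lam * (IZR a + 1) <= lam * IZR b) by (apply Rmult_le_compat_l; lra).
    lra.
Qed.

Lemma flat_le : forall a b c, 0 <= a -> 0 <= b -> 0 <= c -> c <= a + b ->
  c / (1 + c) <= a / (1 + a) + b / (1 + b).
Proof.
  intros a b c Ha Hb Hc H.
  assert (c / (1 + c) <= (a+b) / (1 + (a+b))).
  { apply (Rmult_le_reg_r ((1+c)*(1+(a+b)))). nra.
    field_simplify; try lra. }
  assert (a / (1 + (a+b)) <= a / (1+a)).
  { unfold Rdiv. apply Rmult_le_compat_l; auto. apply Rinv_le_contravar; lra. }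
  assert (b / (1 + (a+b)) <= b / (1+b)).
  { unfold Rdiv. apply Rmult_le_compat_l; auto. apply Rinv_le_contravar; lra. }
  assert ((a+b) / (1 + (a+b)) = a / (1 + (a+b)) + b / (1 + (a+b))) by (field; lra).
  lra.
Qed.

Lemma flat_metric : forall (E : Type) (d' : E -> E -> R), is_metric d' ->
  is_metric (flat d') /\ (forall x y, 0 <= flat d' x y < 1).
Proof.
  intros E d' [P1 [P2 [P3 P4]]].
  assert (B : forall x y, 0 <= flat d' x y < 1).
  { intros x y; unfold flat; specialize (P1 x y). split.
    - unfold Rdiv; apply Rmult_le_pos; [lra|]; apply Rlt_le, Rinv_0_lt_compat; lra.
    - apply (Rmult_lt_reg_r (1 + d' x y)); [lra|]. field_simplify; lra. }
  split; [|exact B].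
  split; [intros x y; apply B|]. split; [|split].
  - intros x y; unfold flat; split.
    + intros H. apply P2. specialize (P1 x y).
      assert (d' x y = (d' x y / (1 + d' x y)) * (1 + d' x y)) by (field; lra).
      rewrite H in H0. lra.
    + intros ->. rewrite (proj2 (P2 y y) eq_refl). field.
  - intros; unfold flat; rewrite P3; reflexivity.
  - intros x y z; unfold flat. apply flat_le; auto.
Qed.

Theorem proposition4 :
  (forall (E : Type) (d d0 : E -> E -> R) (lam : R),
      0 < lam ->
      is_metric d -> is_metric d0 ->
      (forall x y, exists k : Z, d x y = lam * IZR k) ->
      (forall x y, 0 <= d0 x y < lam) ->
      is_metric (fun x y => d x y + d0 x y) /\
      refines (fun x y => d x y + d0 x y) d)
  /\
  (forall (E : Type) (d d' : E -> E -> R),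
      is_metric d -> is_metric d' ->
      (forall x y, exists k : Z, d x y = IZR k) ->
      is_metric (fun x y => d x y + flat d' x y) /\
      refines (fun x y => d x y + flat d' x y) d).
Proof.
  split; [exact part1|].
  intros E d d' Hd Hd' Hk.
  destruct (flat_metric E d' Hd') as [Hf Hb].
  apply (part1 E d (flat d') 1); auto; [lra|].
  intros x y; destruct (Hk x y) as [k Hk']; exists k; lra.
Qed.
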